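(* Let $V$ be a vertex algebra and $M$ a subspace of $V$ with $C_2(V)\subseteq M$ and $\dim_{\mathbb{C}}M/C_2(V)<\infty$. Then $M$ is an $MZ_{0,-1}$-subspace of $V$ if and only if $r(M/C_2(V))$ is an ideal of the commutative associative algebra $V/C_2(V)$.
   Context: A vertex algebra $(V,Y,\mathbf{1})$ is over $\mathbb{C}$; for $u\in V$ write $Y(u,z)=\sum_{n\in\mathbb{Z}}u_nz^{-n-1}$ with $u_n\in\operatorname{End}V$. Iterated products are nested to the right: $v_{n_1}\cdots v_{n_t}v=v_{n_1}(\cdots(v_{n_t}v))$. $C_2(V)=\operatorname{span}_{\mathbb{C}}\{u_{-2}v: u,v\in V\}$; $V/C_2(V)$ is a commutative associative unital algebra with product $(a+C_2(V))(b+C_2(V))=a_{-1}b+C_2(V)$. For a subspace $M\subseteq V$: $r_{0,-1}(M)$ is the set of $v\in V$ for which there is $m\ge 0$ with $v_{n_1}\cdots v_{n_t}v\in M$ for all $t\ge m$ and all $n_1,\dots,n_t\in\{0,-1\}$. $lsr_{0,-1}(M)$ is the set of $v\in V$ such that for every $b\in V$ there is $m\ge0$ with $b_sv_{n_1}\cdots v_{n_t}v\in M$ for all $t\ge m$ and all $s,n_1,\dots,n_t\in\{0,-1\}$. $rsr_{0,-1}(M)$ is the set of $v\in V$ such that for every $w\in V$ there is $m\ge 0$ with $(v_{n_1}\cdots v_{n_t}v)_nw\in M$ for all $t\ge m$ and all $n,n_1,\dots,n_t\in\{0,-1\}$. $sr_{0,-1}(M)=lsr_{0,-1}(M)\cap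 rsr_{0,-1}(M)$. $M$ is an $MZ_{0,-1}$-subspace of $V$ if $r_{0,-1}(M)=sr_{0,-1}(M)$. For a commutative associative unital algebra $A$ and a subspace $U$: $r(U)=\{a\in A:\exists m\ge1,\ a^t\in U\ \forall t\ge m\}$. *)

(* Defs.v *)
From HB Require Import structures.
From mathcomp Require Import all_boot all_order all_algebra.
From mathcomp Require Import reals.
From mathcomp Require Import complex.
Set Implicit Arguments. Unset Strict Implicit. Unset Printing Implicit Defensive.
Import Order.TTheory GRing.Theory Num.Theory.
Local Open Scope ring_scope.

(* Vertex algebras: the mode map is Y u n v = u_n v  (Y(u,z) = sum u_n z^{-n-1}). *)
Section VA.
Variables (K : fieldType) (V : lmodType K).

Definition binz (p : int) (i : nat) : K :=
  (\prod_(k < i) (p - (k : int))%:~R) / (i`!)%:R.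

(* Axioms of a vertex algebra (Frenkel-Lepowsky-Meurman / Lepowsky-Li), with the
   Jacobi identity written in its component (Borcherds) form.  The infinite sums in
   the Borcherds identity have finite support; they are evaluated as the sums over
   i < N for any N beyond which all summands vanish. *)
Record is_vertex_algebra (Y : V -> int -> V -> V) (one : V) : Prop := {
  va_linl : forall (n : int) (v : V) (a : K) (u1 u2 : V),
      Y (a *: u1 + u2) n v = a *: Y u1 n v + Y u2 n v;
  va_linr : forall (u : V) (n : int) (a : K) (v1 v2 : V),
      Y u n (a *: v1 + v2) = a *: Y u n v1 + Y u n v2;
  va_trunc : forall u v : V, exists N : int, forall n : int, N <= n -> Y u n v = 0;
  va_vacuum : forall (n : int) (v : V), Y one n v = if n == -1 then v else 0;
  va_creation : forall (u : V) (n : int), 0 <= n -> Y u n one = 0;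
  va_creation1 : forall u : V, Y u (-1) one = u;
  va_jacobi : forall (u v w : V) (p q r : int) (N : nat),
      (forall i : nat, (N <= i)%N ->
         [/\ Y u (r + i%:Z) v = 0, Y v (q + i%:Z) w = 0 & Y u (p + i%:Z) w = 0]) ->
      \sum_(i < N) binz p i *: Y (Y u (r + i%:Z) v) (p + q - i%:Z) w =
      \sum_(i < N) ((-1) ^+ i * binz r i) *:
          (Y u (p + r - i%:Z) (Y v (q + i%:Z) w)
           - (-1) ^ r *: Y v (q + r - i%:Z) (Y u (p + i%:Z) w))
}.

Variables (Y : V -> int -> V -> V).

Definition is_subspace (M : V -> Prop) : Prop :=
  M 0 /\ forall (a : K) (x y : V), M x -> M y -> M (a *: x + y).

Definition span (S : V -> Prop) (x : V) : Prop :=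
  exists (n : nat) (f : 'I_n -> V) (c : 'I_n -> K),
    (forall i, S (f i)) /\ x = \sum_(i < n) c i *: f i.

Definition C2 (x : V) : Prop := span (fun y => exists u v, y = Y u (-2) v) x.

Definition fin_dim_mod_C2 (M : V -> Prop) : Prop :=
  exists (n : nat) (f : 'I_n -> V), (forall i, M (f i)) /\
    forall x, M x -> exists c : 'I_n -> K, C2 (x - \sum_(i < n) c i *: f i).

(* v_{n_1} ... v_{n_t} x, nested to the right, for s = [:: n_1; ...; n_t] *)
Definition iter_mode (v : V) (s : seq int) (x : V) : V :=
  foldr (fun n y => Y v n y) x s.

Definition in01 (n : int) : bool := (n == 0) || (n == -1).
Definition all01 (s : seq int) : bool := all in01 s.

Definition r01 (M : V -> Prop) (v : V) : Prop :=
  exists m : nat, forall s : seq int, all01 s -> (m <= size s)%N ->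
    M (iter_mode v s v).

Definition lsr01 (M : V -> Prop) (v : V) : Prop :=
  forall b : V, exists m : nat, forall (s : seq int) (k : int),
    in01 k -> all01 s -> (m <= size s)%N -> M (Y b k (iter_mode v s v)).

Definition rsr01 (M : V -> Prop) (v : V) : Prop :=
  forall w : V, exists m : nat, forall (s : seq int) (n : int),
    in01 n -> all01 s -> (m <= size s)%N -> M (Y (iter_mode v s v) n w).

Definition sr01 (M : V -> Prop) (v : V) : Prop := lsr01 M v /\ rsr01 M v.

Definition MZ01_subspace (M : V -> Prop) : Prop :=
  forall v : V, r01 M v <-> sr01 M v.

(* The algebra A = V/C_2(V) is handled through representatives: the class of a
   is a + C_2(V), the product is (a + C2)(b + C2) = a_{-1} b + C2.
   powrep a k is a representative of (a + C2)^(k+1). *)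
Fixpoint powrep (a : V) (k : nat) : V :=
  if k is k'.+1 then Y a (-1) (powrep a k') else a.

(* For U = M / C_2(V) (with C_2(V) ⊆ M), the class a + C2 lies in U iff a ∈ M.
   rep_r M a  <->  a + C_2(V) ∈ r(M / C_2(V)). *)
Definition rep_r (M : V -> Prop) (a : V) : Prop :=
  exists m : nat, (1 <= m)%N /\ forall t : nat, (m <= t)%N -> M (powrep a t.-1).

(* P ⊆ V is the preimage of an ideal of A = V/C_2(V): it contains C_2(V), is a
   subspace, and is stable under multiplication by A. *)
Definition is_ideal_preimage (P : V -> Prop) : Prop :=
  [/\ forall x, C2 x -> P x,
      is_subspace P &
      forall b a : V, P a -> P (Y b (-1) a)].

End VA.

(* Main.v *)
Require Import Defs.
From HB Require Import structures.
From mathcomp Require Import all_boot all_order all_algebra.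
From mathcomp Require Import reals.
From mathcomp Require Import complex.
Import Order.TTheory GRing.Theory Num.Theory.
Local Open Scope ring_scope.
From mathcomp Require Import zify ring.
From Stdlib Require Import ClassicalEpsilon Classical.
Require Import Defs.
Set Implicit Arguments. Unset Strict Implicit. Unset Printing Implicit Defensive.

Section B.
Variables (K : numFieldType).
Lemma binz0 p : binz K p 0 = 1.
Proof. by rewrite /binz big_ord0 fact0 invr1 mulr1. Qed.
Lemma binzS p i : binz K p i.+1 = binz K p i * (p - i%:Z)%:~R / i.+1%:R.
Proof.
rewrite /binz big_ord_recr /= factS natrM invfM; ring.
Qed.
Lemma binz0S i : binz K 0 i.+1 = 0.
Proof. by rewrite /binz big_ord_recl /= subr0 mul0r mul0r. Qed.
Lemma binzN1 i : binz K (-1) i = (-1) ^+ i.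
Proof.
elim: i => [|i IH]; first by rewrite binz0.
rewrite binzS IH exprS.
have -> : ((-1 - i%:Z)%:~R : K) = - i.+1%:R.
  by rewrite -opprD -[(1 + i%:Z)]/(i.+1%:Z) mulrNz.
have h : (i.+1%:R : K) != 0 by rewrite pnatr_eq0.
field; by rewrite -(natrD K 1 i) pnatr_eq0.
Qed.
Lemma binzN2 i : binz K (-2) i = (-1) ^+ i * i.+1%:R.
Proof.
elim: i => [|i IH]; first by rewrite binz0 expr0 mul1r.
rewrite binzS IH exprS.
have -> : ((-2 - i%:Z)%:~R : K) = - i.+2%:R.
  by rewrite -opprD -[(2 + i%:Z)]/(i.+2%:Z) mulrNz.
have h : (i.+1%:R : K) != 0 by rewrite pnatr_eq0.
field; by rewrite -(natrD K 1 i) pnatr_eq0.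
Qed.
End B.

Section VAfacts.
Variables (K : numFieldType) (V : lmodType K) (Y : V -> int -> V -> V) (one : V).
Hypothesis HVA : is_vertex_algebra Y one.

Lemma Yr0 u n : Y u n 0 = 0.
Proof.
have := va_linr HVA u n 1 0 0; rewrite !scale1r addr0 => h.
by apply: (addrI (Y u n 0)); rewrite addr0 -h.
Qed.
Lemma YrD u n x y : Y u n (x + y) = Y u n x + Y u n y.
Proof. by have := va_linr HVA u n 1 x y; rewrite !scale1r. Qed.
Lemma YrZ u n a x : Y u n (a *: x) = a *: Y u n x.
Proof. by have := va_linr HVA u n a x 0; rewrite !addr0 Yr0 addr0. Qed.
Lemma YrN u n x : Y u n (- x) = - Y u n x.
Proof. by rewrite -scaleN1r YrZ scaleN1r. Qed.
Lemma YrB u n x y : Y u n (x - y) = Y u n x - Y u n y.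
Proof. by rewrite YrD YrN. Qed.
Lemma Yl0 v n : Y 0 n v = 0.
Proof.
have := va_linl HVA n v 1 0 0; rewrite !scale1r addr0 => h.
by apply: (addrI (Y 0 n v)); rewrite addr0 -h.
Qed.
Lemma YlD u1 u2 n v : Y (u1 + u2) n v = Y u1 n v + Y u2 n v.
Proof. by have := va_linl HVA n v 1 u1 u2; rewrite !scale1r. Qed.
Lemma YlZ a u n v : Y (a *: u) n v = a *: Y u n v.
Proof. by have := va_linl HVA n v a u 0; rewrite !addr0 Yl0 addr0. Qed.
Lemma YlN u n v : Y (- u) n v = - Y u n v.
Proof. by rewrite -scaleN1r YlZ scaleN1r. Qed.
Lemma YlB u1 u2 n v : Y (u1 - u2) n v = Y u1 n v - Y u2 n v.
Proof. by rewrite YlD YlN. Qed.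

Definition C2g (y : V) := exists u v, y = Y u (-2) v.
Lemma span_ind (Sg P : V -> Prop) : P 0 -> (forall a x y, P x -> P y -> P (a *: x + y)) ->
  (forall x, Sg x -> P x) -> forall x, span Sg x -> P x.
Proof.
move=> P0 PD PS x [n [f [c [Sf ->]]]]; elim: n f c Sf => [|n IH] f c Sf.
  by rewrite big_ord0.
rewrite big_ord_recr /= addrC.
have := PD (c ord_max) (f ord_max) _ (PS _ (Sf ord_max)).
by apply; apply: IH => i; apply: Sf.
Qed.
Lemma span0 (S : V -> Prop) : span S 0.
Proof. by exists 0%N, (fun _ => 0), (fun _ => 0); split=> [[]//|]; rewrite big_ord0. Qed.
Lemma spanS (S : V -> Prop) (x : V) : S x -> span S x.
Proof.
move=> Sx; exists 1%N, (fun _ => x), (fun _ => 1); split=> // .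
by rewrite big_ord1 scale1r.
Qed.
Lemma spanZD (S : V -> Prop) a (x y : V) : span S x -> span S y -> span S (a *: x + y).
Proof.
move=> [n [f [c [Sf ->]]]] [m [g [d [Sg ->]]]].
exists (n + m)%N, (fun i => match split i with inl j => f j | inr j => g j end),
  (fun i => match split i with inl j => a * c j | inr j => d j end); split.
  by move=> i; case: (split i).
rewrite big_split_ord /= scaler_sumr; congr (_ + _); apply: eq_bigr => i _.
  by rewrite (unsplitK (inl i)) scalerA.
by rewrite (unsplitK (inr i)).
Qed.

Notation C2 := (C2 Y).
Lemma C2_0 : C2 0. Proof. exact: span0. Qed.
Lemma C2_ZD a x y : C2 x -> C2 y -> C2 (a *: x + y). Proof. exact: spanZD. Qed.
Lemma C2_D x y : C2 x -> C2 y -> C2 (x + y).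
Proof. by move=> hx hy; have := C2_ZD 1 hx hy; rewrite scale1r. Qed.
Lemma C2_Z a x : C2 x -> C2 (a *: x).
Proof. by move=> hx; have := C2_ZD a hx C2_0; rewrite addr0. Qed.
Lemma C2_N x : C2 x -> C2 (- x).
Proof. by move=> hx; rewrite -scaleN1r; apply: C2_Z. Qed.
Lemma C2_B x y : C2 x -> C2 y -> C2 (x - y).
Proof. by move=> hx hy; apply: C2_D => //; apply: C2_N. Qed.
Lemma C2_gen u v : C2 (Y u (-2) v).
Proof. by apply: spanS; exists u, v. Qed.
Lemma C2_ind (P : V -> Prop) : P 0 -> (forall a x y, P x -> P y -> P (a *: x + y)) ->
  (forall u v, P (Y u (-2) v)) -> forall x, C2 x -> P x.
Proof. by move=> P0 PD PG; apply: span_ind => // x [u [v ->]]. Qed.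
Lemma C2_sum (I : finType) (F : I -> V) : (forall i, C2 (F i)) -> C2 (\sum_i F i).
Proof.
move=> h; apply: (big_ind C2) => //; [exact: C2_0|exact: C2_D].
Qed.
Lemma C2_sumo n (F : 'I_n -> V) : (forall i, C2 (F i)) -> C2 (\sum_(i < n) F i).
Proof. exact: C2_sum. Qed.


Lemma jac u v w p q r : exists N0 : nat, forall N, (N0 <= N)%N ->
  \sum_(i < N) binz K p i *: Y (Y u (r + i%:Z) v) (p + q - i%:Z) w =
  \sum_(i < N) ((-1) ^+ i * binz K r i) *:
          (Y u (p + r - i%:Z) (Y v (q + i%:Z) w)
           - (-1) ^ r *: Y v (q + r - i%:Z) (Y u (p + i%:Z) w)).
Proof.
have [N1 h1] := va_trunc HVA u v.
have [N2 h2] := va_trunc HVA v w.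
have [N3 h3] := va_trunc HVA u w.
exists (`|N1 - r|%N + `|N2 - q|%N + `|N3 - p|%N)%N => N hN.
apply: (va_jacobi HVA) => i hi; split.
- apply: h1; lia.
- apply: h2; lia.
- apply: h3; lia.
Qed.
End VAfacts.

Section D.
Variables (K : numFieldType) (V : lmodType K) (Y : V -> int -> V -> V) (one : V).
Hypothesis HVA : is_vertex_algebra Y one.
Notation C2 := (C2 Y).
Lemma jac_p0 u v w q r : exists N0 : nat, forall N, (N0 <= N)%N ->
  Y (Y u r v) q w =
  \sum_(i < N) ((-1) ^+ i * binz K r i) *:
          (Y u (r - i%:Z) (Y v (q + i%:Z) w)
           - (-1) ^ r *: Y v (q + r - i%:Z) (Y u i%:Z w)).
Proof.
have [N0 hN] := jac HVA u v w 0 q r.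
exists N0.+1 => N hN0; have := hN N (leq_trans (leqnSn _) hN0).
case: N hN0 => // N hN0.
rewrite big_ord_recl /= binz0 scale1r addr0 add0r subr0 big1 ?addr0; last first.
  by move=> i _; rewrite binz0S scale0r.
move=> ->; apply: eq_bigr => i _; by rewrite !add0r.
Qed.

Lemma jac_r0 u v w p q : exists N0 : nat, forall N, (N0 <= N)%N ->
  \sum_(i < N) binz K p i *: Y (Y u i%:Z v) (p + q - i%:Z) w =
  Y u p (Y v q w) - Y v q (Y u p w).
Proof.
have [N0 hN] := jac HVA u v w p q 0.
exists N0.+1 => N hN0; have := hN N (leq_trans (leqnSn _) hN0).
case: N hN0 => // N hN0.
rewrite [in RHS]big_ord_recl /= binz0 mulr1 scale1r [in RHS]big1 ?addr0; last first.
  by move=> i _; rewrite binz0S mulr0 scale0r.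
rewrite ?subr0 ?addr0 expr0z scale1r => <-; apply: eq_bigr => i _; by rewrite !add0r.
Qed.

Lemma F0 k : forall u w, C2 (Y u (- (k.+2)%:Z) w).
Proof.
elim: k => [|k IH] u w; first exact: C2_gen.
have [N0 hN] := jac_p0 u one w (- (k.+2)%:Z) (-2).
have hk : (k.+1 < N0 + k.+2)%N by lia.
have := hN (N0 + k.+2)%N (leq_addr _ _).
rewrite (bigD1 (Ordinal hk)) //= big1 ?addr0; last first.
  move=> i /eqP hi; have hi' : (i : nat) <> k.+1 by move=> h; apply: hi; apply: val_inj.
  rewrite !(va_vacuum HVA).
  have -> : (- (k.+2)%:Z + i%:Z == -1) = false by apply/eqP; lia.
  have -> : (- (k.+2)%:Z + -2 - i%:Z == -1) = false by apply/eqP; lia.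
  by rewrite (Yr0 HVA) scaler0 subr0 scaler0.
rewrite !(va_vacuum HVA).
have -> : (- (k.+2)%:Z + (k.+1)%:Z == -1) = true by apply/eqP; lia.
have -> : (- (k.+2)%:Z + -2 - (k.+1)%:Z == -1) = false by apply/eqP; lia.
rewrite scaler0 subr0 binzN2 mulrA -exprMn mulrNN mulr1 expr1n mul1r.
have -> : (-2 - (k.+1)%:Z) = - (k.+3)%:Z by lia.
move=> h.
have hc : ((k.+2)%:R : K) != 0 by rewrite pnatr_eq0.
have -> : Y u (- (k.+3)%:Z) w = ((k.+2)%:R)^-1 *: Y (Y u (-2) one) (- (k.+2)%:Z) w.
  by rewrite h scalerA mulVf // scale1r.
by apply: C2_Z; apply: IH.
Qed.

Lemma F0' u n w : n <= -2 -> C2 (Y u n w).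
Proof.
move=> hn; have -> : n = - ((`|n| - 2)%N.+2)%:Z by lia.
exact: F0.
Qed.

Lemma comm0 u v w q : Y u 0 (Y v q w) = Y v q (Y u 0 w) + Y (Y u 0 v) q w.
Proof.
have [N0 hN] := jac_r0 u v w 0 q.
have := hN N0.+1 (leqnSn _).
rewrite big_ord_recl big1 ?addr0 /=; last by move=> i _; rewrite binz0S scale0r.
rewrite binz0 scale1r add0r ?subr0 => ->; by rewrite addrC subrK.
Qed.

Lemma commN1 u v w q : q <= -2 -> C2 (Y u (-1) (Y v q w) - Y v q (Y u (-1) w)).
Proof.
move=> hq; have [N0 hN] := jac_r0 u v w (-1) q.
rewrite -(hN N0 (leqnn _)).
apply: (@C2_sum _ _ _ _ _ (fun i : (ordinal N0) => _)).
move=> i; apply: C2_Z; apply: F0'; lia.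
Qed.

Lemma F2_0 u x : C2 x -> C2 (Y u 0 x).
Proof.
move: x; apply: (C2_ind (P := fun x => C2 (Y u 0 x))) => [|a x y hx hy|v w].
- by rewrite (Yr0 HVA); exact: C2_0.
- by rewrite (YrD HVA) (YrZ HVA); apply: C2_ZD.
- by rewrite comm0; apply: C2_D; apply: C2_gen.
Qed.

Lemma F2_N1 u x : C2 x -> C2 (Y u (-1) x).
Proof.
move: x; apply: (C2_ind (P := fun x => C2 (Y u (-1) x))) => [|a x y hx hy|v w].
- by rewrite (Yr0 HVA); exact: C2_0.
- by rewrite (YrD HVA) (YrZ HVA); apply: C2_ZD.
- have := commN1 u v w (lexx _); have := @C2_gen _ _ Y v (Y u (-1) w).
  move=> h1 h2; have := C2_D h1 h2; by rewrite addrC subrK.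
Qed.

Lemma F2 u n x : in01 n -> C2 x -> C2 (Y u n x).
Proof. by case/orP=> /eqP ->; [apply: F2_0 | apply: F2_N1]. Qed.

Lemma F3 x q w : q <= 0 -> C2 x -> C2 (Y x q w).
Proof.
move=> hq; move: x; apply: (C2_ind (P := fun x => C2 (Y x q w))) => [|a x y hx hy|u v].
- by rewrite (Yl0 HVA); exact: C2_0.
- by rewrite (YlD HVA) (YlZ HVA); apply: C2_ZD.
- have [N0 hN] := jac_p0 u v w q (-2).
  rewrite (hN N0 (leqnn _)); apply: C2_sum => i; apply: C2_Z; apply: C2_B.
    by apply: F0'; lia.
  by apply: C2_Z; apply: F0'; lia.
Qed.

Lemma skew u v r : C2 (Y u r v + (-1) ^ r *: Y v r u).
Proof.
have [N0 hN] := jac HVA u v one (-1) 0 r.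
have := hN N0.+1 (leqnSn _).
rewrite big_ord_recl [in RHS]big_ord_recl [in RHS]big1 /=; last first.
  move=> i _; rewrite (va_creation HVA) ?(Yr0 HVA) ?sub0r; last by lia.
  by rewrite (va_creation HVA) ?(Yr0 HVA) ?scaler0 ?oppr0 ?scaler0 //; lia.
rewrite ?addr0 ?subr0 ?add0r !binz0 expr0 mul1r !scale1r.
rewrite [Y v 0 one](va_creation HVA) // (Yr0 HVA) sub0r ?add0r ?addr0 !(va_creation1 HVA) => h.
have : C2 (- \sum_(i < N0) binz K (-1) (bump 0 i) *:
      Y (Y u (r + (bump 0 i)%:Z) v) (-1 - (bump 0 i)%:Z) one).
  apply: C2_N; apply: C2_sum => i; apply: C2_Z; apply: F0'; rewrite /bump /=; lia.
set S := (\sum_(i < N0) _) in h *.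
by rewrite (canRL (addrK S) h) addrAC addNr add0r.
Qed.

Lemma expN1N1 : ((-1 : K) ^ (-1 : int)) = -1.
Proof. by rewrite -[(-1 : int)]/(- (1%:Z)) -exprnN expr1 invrN1. Qed.

Lemma commC u v : C2 (Y u (-1) v - Y v (-1) u).
Proof. by have := skew u v (-1); rewrite expN1N1 scaleN1r. Qed.

Lemma skew0 u v : C2 (Y u 0 v + Y v 0 u).
Proof. by have := skew u v 0; rewrite expr0z scale1r. Qed.

Lemma F7 v : C2 (Y v 0 v).
Proof.
have := C2_Z (2%:R^-1) (skew0 v v).
have h2 : (2%:R : K) != 0 by rewrite pnatr_eq0.
by rewrite -mulr2n -scaler_nat scalerA mulVf // scale1r.
Qed.

Lemma assoc u v w : C2 (Y (Y u (-1) v) (-1) w - Y u (-1) (Y v (-1) w)).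
Proof.
have [N0 hN] := jac_p0 u v w (-1) (-1).
rewrite (hN N0.+1 (leqnSn _)) big_ord_recl /= binzN1 !expr0 mul1r scale1r.
have e : forall a b c : V, a + b + c - a = b + c by move=> a b c; rewrite addrC !addrA addNr add0r.
rewrite ?addr0 ?subr0 expN1N1 e.
apply: C2_D; first by apply: C2_N; apply: C2_Z; apply: C2_gen.
apply: C2_sum => i; apply: C2_Z; apply: C2_B; first by apply: F0'; rewrite /bump /=; lia.
by apply: C2_Z; apply: F0'; rewrite /bump /=; lia.
Qed.
End D.

Section Alg.
Variables (K : fieldType) (A : comAlgType K) (U : A -> Prop).
Hypotheses (U0 : U 0) (UD : forall x y, U x -> U y -> U (x + y))
  (UZ : forall (c : K) x, U x -> U (c *: x)).
Variables (n : nat) (f : 'I_n -> A).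
Hypothesis Hf : forall x, U x -> exists c : 'I_n -> K, x = \sum_i c i *: f i.

Lemma U_sum (I : finType) (F : I -> A) : (forall i, U (F i)) -> U (\sum_i F i).
Proof. by move=> h; apply: (big_ind U). Qed.
Lemma U_natmul x k : U x -> U (x *+ k).
Proof. by move=> h; elim: k => [|k IH]; rewrite ?mulr0n // mulrS; apply: UD. Qed.
Lemma UN x : U x -> U (- x).
Proof. by move=> h; rewrite -scaleN1r; apply: UZ. Qed.
Lemma UB x y : U x -> U y -> U (x - y).
Proof. by move=> hx hy; apply: UD => //; apply: UN. Qed.

Lemma lindep (g : 'I_n.+1 -> A) : (forall j, U (g j)) ->
  exists a : 'I_n.+1 -> K, (exists j, a j != 0) /\ \sum_j a j *: g j = 0.
Proof.
move=> hg.
pose c j := proj1_sig (constructive_indefinite_description _ (Hf (hg j))).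
have hc j : g j = \sum_i c j i *: f i.
  exact: (proj2_sig (constructive_indefinite_description _ (Hf (hg j)))).
pose C : 'M[K]_(n.+1, n) := \matrix_(j, i) c j i.
pose K0 := kermx C.
have nz : K0 != 0.
  rewrite kermx_eq0 /row_free; apply/eqP => h.
  by have := rank_leq_col C; rewrite h ltnn.
have /existsP [i0 hi0] : [exists i0, [exists j, K0 i0 j != 0]].
  move: nz; apply: contraR; rewrite negb_exists => /forallP h.
  apply/eqP/matrixP => i j.
  by move: (h i); rewrite negb_exists => /forallP /(_ j); rewrite negbK => /eqP ->; rewrite mxE.
exists (fun j => K0 i0 j); split; first by case/existsP: hi0 => j hj; exists j.
have hk : forall k, \sum_j K0 i0 j * c j k = 0.
  move=> k; have := congr1 (fun M : 'M_(n.+1, n) => M i0 k) (mulmx_ker C).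
  rewrite !mxE => h; rewrite -[in RHS]h; apply: eq_bigr => j _; by rewrite [C _ _]mxE.
under eq_bigr => j0 _ do rewrite hc scaler_sumr.
rewrite exchange_big /=; apply: big1 => k _.
by under eq_bigr => j _ do rewrite scalerA; rewrite -scaler_suml hk scale0r.
Qed.

Local Notation ev x p := (@horner_alg K A x p).

Lemma ev_sum x p : ev x p = \sum_(i < size p) p`_i *: x ^+ i.
Proof.
rewrite /horner_alg /horner_morph (@horner_coef_wide _ (size p)); last first.
  by rewrite /map_poly; apply: size_poly.
by apply: eq_bigr => i _; rewrite coef_map /= mulr_algl.
Qed.

Lemma evXn x m p : ev x ('X^m * p) = x ^+ m * ev x p.
Proof. by rewrite rmorphM rmorphXn /= horner_algX. Qed.

Lemma evU b x m : (forall t, (m <= t)%N -> U (b * x ^+ t)) ->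
  forall p, U (b * ev x ('X^m * p)).
Proof.
move=> h p; rewrite evXn ev_sum mulr_sumr mulr_sumr; apply: U_sum => i.
by rewrite -!scalerAr -exprD; apply: UZ; apply: h; rewrite leq_addr.
Qed.

Lemma evU1 x m : (forall t, (m <= t)%N -> U (x ^+ t)) -> forall p, U (ev x ('X^m * p)).
Proof.
move=> h p; rewrite -[ev _ _]mul1r; apply: evU => t ht; rewrite mul1r; exact: h.
Qed.

Lemma rel x m : (forall t, (m <= t)%N -> U (x ^+ t)) ->
  exists L p, (0 < L)%N /\ x ^+ L = x ^+ L.+1 * ev x p.
Proof.
move=> h.
have [a [[j1 hj1] ha]] := lindep (g := fun j : 'I_n.+1 => x ^+ (m + j)) (fun j => h _ (leq_addr _ _)).
pose q := \sum_(j < n.+1) a j *: 'X^(m + j).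
have evq : ev x q = 0.
  rewrite -[RHS]ha /q rmorph_sum; apply: eq_bigr => j _.
  by rewrite -mul_polyC rmorphM /= horner_algC mulr_algl rmorphXn /= horner_algX.
have qnz : q != 0.
  apply/eqP => /(congr1 (fun p : {poly K} => p`_(m + j1))).
  rewrite coef0 /q coef_sum (bigD1 j1) //= coefZ coefXn eqxx mulr1 big1 ?addr0.
    by move/eqP; rewrite (negbTE hj1).
  move=> j hj; rewrite coefZ coefXn eqn_add2l.
  by rewrite eq_sym; move: hj; rewrite -val_eqE /= => /negbTE ->; rewrite mulr0.
have [L [q1 hroot hq]] := multiplicity_XsubC q 0.
rewrite qnz /= in hroot.
have hc : q1.[0] != 0 by [].
have [q2 hq2] : exists q2, q1 - q1.[0]%:P = q2 * ('X - 0%:P).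
  by apply/factor_theorem; rewrite /root hornerD hornerN hornerC subrr.
rewrite polyC0 subr0 in hq hq2.
have hq1 : q1 = q1.[0]%:P + q2 * 'X by rewrite -hq2 addrC subrK.
move: evq; rewrite hq hq1 rmorphM rmorphD rmorphM rmorphXn /= horner_algC horner_algX.
rewrite mulrDl mulr_algl -mulrA -exprS => e.
have e2 : x ^+ L = x ^+ L.+1 * ev x (- (q1.[0])^-1 *: q2).
  have e' : horner_alg x q2 * x ^+ L.+1 = - (q1.[0] *: x ^+ L).
    by apply/eqP; rewrite -addr_eq0 addrC e.
  rewrite -mul_polyC rmorphM /= horner_algC mulr_algl -scalerAr mulrC e'.
  by rewrite scalerN scaleNr opprK scalerA mulVf // scale1r.
exists L.+1, (- (q1.[0])^-1 *: q2); split => //.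
by rewrite exprS e2 mulrA -exprS.
Qed.

Definition rA x := exists m, forall t, (m <= t)%N -> U (x ^+ t.+1).
Definition strong x := exists N, forall b t, (N <= t)%N -> U (b * x ^+ t).
Definition lsrA x := forall b, exists m, forall t, (m <= t)%N -> U (b * x ^+ t.+1).

Lemma rA_shift x : rA x -> exists m, forall t, (m <= t)%N -> U (x ^+ t).
Proof.
case=> m h; exists m.+1 => [[|t]] // ht; exact: h.
Qed.

Lemma relk (x h : A) L : x ^+ L = x ^+ L.+1 * h -> forall k, x ^+ L = x ^+ (L + k) * h ^+ k.
Proof.
move=> hL.
have hj j : x ^+ (L + j) = x ^+ (L + j).+1 * h.
  by rewrite exprD hL mulrAC -exprD addSn.
elim=> [|k IH]; first by rewrite addn0 expr0 mulr1.
by rewrite {1}IH hj addnS [h ^+ k.+1]exprS mulrA.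
Qed.

Lemma idem (x h : A) L : x ^+ L = x ^+ L.+1 * h ->
  let e := x ^+ L * h ^+ L in e * e = e /\ x ^+ L * e = x ^+ L.
Proof.
move=> hL e.
have h1 : x ^+ L * e = x ^+ L.
  by rewrite /e mulrA -exprD -relk.
split => //.
by rewrite {1}/e mulrC mulrA [e * _]mulrC h1.
Qed.

Lemma evpow x p k : (ev x p) ^+ k = ev x (p ^+ k).
Proof. by rewrite rmorphXn. Qed.

Lemma KL1 x : rA x -> lsrA x -> strong x.
Proof.
move=> /rA_shift [m hm] hl.
have [L [p [L0 hL]]] := rel hm.
exists L => b t ht.
have [mb hb] := hl b.
have e : x ^+ t = x ^+ (t + mb.+1) * (ev x p) ^+ mb.+1.
  by rewrite -(subnK ht) -addnA !(exprD _ (t - L)) (relk hL mb.+1) mulrA.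
rewrite e evpow -evXn.
apply: evU => s hs; have -> : s = s.-1.+1 by lia.
apply: hb; lia.
Qed.

Lemma strong_add u v : strong u -> strong v -> rA (u + v).
Proof.
move=> [N1 h1] [N2 h2]; exists (N1 + N2)%N => t ht.
rewrite exprDn; apply: U_sum => i; apply: U_natmul.
case: (leqP N2 i) => hi; first by apply: h2.
rewrite mulrC; apply: h1; have := ltn_ord i; lia.
Qed.

Lemma T_fwd : (forall x, rA x -> lsrA x) ->
  [/\ forall x y, rA x -> rA y -> rA (x + y),
      forall (c : K) x, rA x -> rA (c *: x) &
      forall b x, rA x -> rA (b * x)].
Proof.
move=> H; split.
- move=> x y hx hy; apply: strong_add; apply: KL1 => //; exact: H.
- move=> c x [m hm]; exists m => t ht; rewrite exprZn; apply: UZ; exact: hm.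
- move=> b x hx; have [N hN] := KL1 hx (H x hx).
  by exists N => t ht; rewrite exprMn; apply: hN; lia.
Qed.

Section Bwd.
Hypothesis Hmul : forall b x, rA x -> rA (b * x).

Lemma geom (a : A) k : (1 + a) * \sum_(j < k) (- a) ^+ j = 1 - (- a) ^+ k.
Proof.
elim: k => [|k IH]; first by rewrite big_ord0 mulr0 expr0 subrr.
by rewrite big_ord_recr /= mulrDr IH exprS; ring.
Qed.

Lemma unit_in_U w e v : w * e = w -> w * v = e -> rA w -> U w.
Proof.
move=> we wv hw; have [m hm] := rA_shift hw.
have [L [p [L0 hL]]] := rel hm.
have wej j : w * e ^+ j = w.
  by elim: j => [|j IH]; rewrite ?expr0 ?mulr1 // exprS mulrCA IH mulrC we.
have h1 : w = w ^+ 1.+1 * ev w p.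
  case: L L0 hL => // L' _ hL.
  have E := congr1 (fun z => z * v ^+ L') hL.
  have A1 : w ^+ L'.+1 * v ^+ L' = w by rewrite exprS -mulrA -exprMn wv wej.
  have A2 : w ^+ L'.+2 * ev w p * v ^+ L' = w ^+ 2 * ev w p * (w * v) ^+ L'.
    by rewrite exprMn -[L'.+2]/(2 + L')%N exprD; ring.
  rewrite /= A1 A2 wv in E.
  by rewrite {1}E mulrAC expr2 -[w * w * e ^+ L'](mulrA w w) wej.
have h1' : w ^+ 1 = w ^+ 1.+1 * ev w p by rewrite expr1.
rewrite -[X in U X]expr1 (relk h1' m) evpow -evXn.
apply: evU1 => t ht; apply: hm; lia.
Qed.

Lemma nil_in_U e z k : e * e = e -> rA e -> z * e = z -> z ^+ k = 0 -> U z.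
Proof.
move=> ee he ze zk.
have hw c : U (e + c *: z).
  pose w := e + c *: z.
  apply: (@unit_in_U w e (e * \sum_(j < k) (- (c *: z)) ^+ j)).
  - by rewrite /w mulrDl ee -scalerAl ze.
  - have -> : w = e * (1 + c *: z) by rewrite /w mulrDr mulr1 -scalerAr mulrC ze.
    rewrite mulrACA ee geom exprNn exprZn zk scaler0 mulr0 subr0.
    by rewrite mulr1.
  - have -> : w = (1 + c *: z) * e by rewrite /w mulrDl mul1r -scalerAl ze.
    exact: Hmul.
have := UB (hw 1) (hw 0); by rewrite scale0r addr0 scale1r addrC addKr.
Qed.

Lemma idem_in_U e y : e * e = e -> rA e -> y * e = y -> U y.
Proof.
move=> ee he ye.
have hy : rA y by rewrite -ye; apply: Hmul.
have [m hm] := rA_shift hy.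
have [L [p [L0 hL]]] := rel hm.
have [ff yf] := idem hL; set fq := y ^+ L * (ev y p) ^+ L in ff yf.
have fk k : fq ^+ k.+1 = fq by elim: k => [|k IH]; rewrite ?expr1 // exprS IH ff.
have Uyf : U (y * fq).
  rewrite -(fk m) /fq exprMn -!exprM mulrA -exprS evpow -evXn.
  have hLm : (m <= L * m.+1)%N by apply: (leq_trans (leqnSn m)); apply: leq_pmull.
  apply: evU1 => t ht; apply: hm; lia.
pose z := y - y * fq.
have zk : z ^+ L = 0.
  have -> : z = y * (1 - fq) by rewrite /z mulrBr mulr1.
  have gk k : (1 - fq) ^+ k.+1 = 1 - fq.
    elim: k => [|k IH]; rewrite ?expr1 // exprS IH mulrBl mul1r mulrBr mulr1 ff.
    by rewrite subrr subr0.
  have [L' eL] : exists L', L = L'.+1 by exists L.-1; lia.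
  by rewrite exprMn {2}eL gk mulrBr mulr1 yf subrr.
have Uz : U z.
  apply: (nil_in_U ee he _ zk).
  by rewrite /z mulrBl ye mulrAC ye.
by have := UD Uyf Uz; rewrite /z addrC subrK.
Qed.

Lemma T_bwd x : rA x -> strong x.
Proof.
move=> hx; have [m hm] := rA_shift hx.
have [L [p [L0 hL]]] := rel hm.
have [ee xe] := idem hL; set e := x ^+ L * (ev x p) ^+ L in ee xe.
have he : rA e.
  have [L' eL] : exists L', L = L'.+1 by exists L.-1; lia.
  have -> : e = (x ^+ L' * (ev x p) ^+ L) * x by rewrite /e {1}eL exprS; ring.
  exact: Hmul.
exists L => b t ht; apply: (idem_in_U ee he).
by rewrite -mulrA -(subnK ht) exprD -mulrA xe.
Qed.
End Bwd.
End Alg.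

Local Open Scope quotient_scope.
Definition pb (P : Prop) : bool := if excluded_middle_informative P then true else false.
Lemma pbP P : reflect P (pb P).
Proof. by rewrite /pb; case: excluded_middle_informative => h; constructor. Qed.


Section Iter.
Variables (K : numFieldType) (V : lmodType K) (Y : V -> int -> V -> V) (one : V).
Hypothesis HVA : is_vertex_algebra Y one.
Local Notation C2 := (C2 Y).

Lemma iter_nseq v k : iter_mode Y v (nseq k (-1)) v = powrep Y v k.
Proof. by elim: k => //= k ->. Qed.
Lemma all01_nseq k : all01 (nseq k (-1)).
Proof. by elim: k. Qed.
Lemma D0 v k : C2 (Y v 0 (powrep Y v k)).
Proof.
elim: k => [|k IH]; first exact: (F7 HVA).
rewrite /= (comm0 HVA); apply: C2_D; first exact: (F2_N1 HVA).
by apply: (F3 HVA) => //; exact: (F7 HVA).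
Qed.
Lemma iter_cases v s : all01 s ->
  C2 (iter_mode Y v s v) \/ iter_mode Y v s v = powrep Y v (size s).
Proof.
elim: s => [|n s IH]; first by right.
rewrite /all01 /= => /andP [hn hs].
case: (IH hs) => [h|->]; first by left; apply: (F2 HVA).
by case/orP: hn => /eqP ->; [left; exact: D0 | right].
Qed.

Variables (M : V -> Prop) (HC2M : forall x, C2 x -> M x).
Lemma r01_of_rep v : rep_r Y M v -> r01 Y M v.
Proof.
case=> m [m1 h]; exists m => s hs hsz.
case: (iter_cases v hs) => [hc|->]; first exact: HC2M.
by apply: (h (size s).+1); lia.
Qed.
Lemma rep_of_r01 v : r01 Y M v -> rep_r Y M v.
Proof.
case=> m h; exists m.+1; split => // t ht.
rewrite -iter_nseq; apply: h; first exact: all01_nseq.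
by rewrite size_nseq; lia.
Qed.
End Iter.

Section Quot.
Variables (K : numFieldType) (V : lmodType K) (Y : V -> int -> V -> V) (one : V).
Hypothesis HVA : is_vertex_algebra Y one.
Hypothesis Hnt : ~ C2 Y one.
Local Notation C2 := (C2 Y).

Definition eqv (x y : V) := pb (C2 (x - y)).
Lemma eqv_refl : reflexive eqv.
Proof. by move=> x; apply/pbP; rewrite subrr; apply: C2_0. Qed.
Lemma eqv_sym : symmetric eqv.
Proof.
by move=> x y; apply/pbP/pbP => h; have := C2_N h; rewrite opprB.
Qed.
Lemma eqv_trans : transitive eqv.
Proof.
move=> y x z /pbP h1 /pbP h2; apply/pbP; have := C2_D h1 h2.
by rewrite addrA subrK.
Qed.
Definition eqvr := EquivRel eqv eqv_refl eqv_sym eqv_trans.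
Definition Q := {eq_quot eqvr}.
HB.instance Definition _ := Choice.on Q.
Definition pi : V -> Q := \pi_Q.
Definition rep : Q -> V := @repr _ Q.
Lemma piP' x y : pi x = pi y <-> C2 (x - y).
Proof.
split; first by move/eqmodP/pbP.
by move=> h; apply/eqmodP/pbP.
Qed.
Lemma repK a : pi (rep a) = a.
Proof. exact: reprK. Qed.
Lemma rep_pi x : C2 (rep (pi x) - x).
Proof. by apply/piP'; rewrite repK. Qed.

Lemma rep_pi' x : C2 (x - rep (pi x)).
Proof. by have := C2_N (rep_pi x); rewrite opprB. Qed.
Lemma eqv_add x x' y y' : C2 (x - x') -> C2 (y - y') -> C2 ((x + y) - (x' + y')).
Proof. by move=> h1 h2; have := C2_D h1 h2; rewrite opprD addrACA. Qed.
Lemma eqv_opp x x' : C2 (x - x') -> C2 (- x - - x').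
Proof. by move=> h; have := C2_N h; rewrite opprB opprK addrC. Qed.
Lemma eqv_scale c x x' : C2 (x - x') -> C2 (c *: x - c *: x').
Proof. by move=> h; rewrite -scalerBr; apply: C2_Z. Qed.
Lemma eqv_mul x x' y y' : C2 (x - x') -> C2 (y - y') ->
  C2 (Y x (-1) y - Y x' (-1) y').
Proof.
move=> h1 h2.
have a1 : C2 (Y x (-1) y - Y x' (-1) y) by rewrite -(YlB HVA); apply: (F3 HVA).
have a2 : C2 (Y x' (-1) y - Y x' (-1) y') by rewrite -(YrB HVA); apply: (F2_N1 HVA).
by have := C2_D a1 a2; rewrite addrA subrK.
Qed.

Definition addQ (a b : Q) := pi (rep a + rep b).
Definition oppQ (a : Q) := pi (- rep a).
Definition zeroQ := pi 0.
Definition mulQ (a b : Q) := pi (Y (rep a) (-1) (rep b)).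
Definition oneQ := pi one.
Definition scaleQ (c : K) (a : Q) := pi (c *: rep a).

Lemma pi_add x y : pi (x + y) = addQ (pi x) (pi y).
Proof. by rewrite /addQ; apply/piP'; apply: eqv_add; apply: rep_pi'. Qed.
Lemma pi_opp x : pi (- x) = oppQ (pi x).
Proof. by rewrite /oppQ; apply/piP'; apply: eqv_opp; apply: rep_pi'. Qed.
Lemma pi_mul x y : pi (Y x (-1) y) = mulQ (pi x) (pi y).
Proof. by rewrite /mulQ; apply/piP'; apply: eqv_mul; apply: rep_pi'. Qed.
Lemma pi_scale c x : pi (c *: x) = scaleQ c (pi x).
Proof. by rewrite /scaleQ; apply/piP'; apply: eqv_scale; apply: rep_pi'. Qed.

Lemma addQA : associative addQ.
Proof.
by move=> a b c; rewrite -[a]repK -[b]repK -[c]repK; move: (rep a) (rep b) (rep c) => x y z; rewrite -!pi_add addrA.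
Qed.
Lemma addQC : commutative addQ.
Proof. by move=> a b; rewrite -[a]repK -[b]repK; move: (rep a) (rep b) => x y; rewrite -!pi_add addrC. Qed.
Lemma add0Q : left_id zeroQ addQ.
Proof. by move=> a; rewrite -[a]repK; move: (rep a) => x; rewrite /zeroQ -!pi_add add0r. Qed.
Lemma addNQ : left_inverse zeroQ oppQ addQ.
Proof. by move=> a; rewrite -[a]repK; move: (rep a) => x; rewrite -pi_opp -!pi_add addNr. Qed.
HB.instance Definition _ := GRing.isZmodule.Build Q addQA addQC add0Q addNQ.
Lemma piD x y : pi (x + y) = pi x + pi y. Proof. exact: pi_add. Qed.
Lemma pi0 : pi 0 = 0. Proof. by []. Qed.

Lemma mulQA : associative mulQ.
Proof.
move=> a b c; rewrite -[a]repK -[b]repK -[c]repK; move: (rep a) (rep b) (rep c) => x y z; rewrite -!pi_mul.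
by apply/piP'; have := C2_N (assoc HVA x y z); rewrite opprB.
Qed.
Lemma mulQC : commutative mulQ.
Proof. by move=> a b; rewrite -[a]repK -[b]repK; move: (rep a) (rep b) => x y; rewrite -!pi_mul; apply/piP'; apply: (commC HVA). Qed.
Lemma mul1Q : left_id oneQ mulQ.
Proof. by move=> a; rewrite -[a]repK; move: (rep a) => x; rewrite /oneQ -!pi_mul (va_vacuum HVA). Qed.
Lemma mulQDl : left_distributive mulQ addQ.
Proof.
by move=> a b c; rewrite -[a]repK -[b]repK -[c]repK; move: (rep a) (rep b) (rep c) => x y z; rewrite -pi_add -!pi_mul -(pi_add (Y x (-1) z)) (YlD HVA).
Qed.
Lemma oneQ_neq0 : oneQ != zeroQ.
Proof. by apply/eqP => /piP'; rewrite subr0. Qed.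
HB.instance Definition _ := GRing.Zmodule_isComNzRing.Build Q mulQA mulQC mul1Q mulQDl oneQ_neq0.

Lemma scaleQA a b v : scaleQ a (scaleQ b v) = scaleQ (a * b) v.
Proof. by rewrite -[v]repK; move: (rep v) => x; rewrite -!pi_scale scalerA. Qed.
Lemma scale1Q : left_id 1 scaleQ.
Proof. by move=> a; rewrite -[a]repK; move: (rep a) => x; rewrite -!pi_scale scale1r. Qed.
Lemma scaleQDr : right_distributive scaleQ +%R.
Proof.
move=> c a b; rewrite -[a]repK -[b]repK; move: (rep a) (rep b) => x y.
by rewrite -(piD x y) -(pi_scale c x) -(pi_scale c y) -(piD (c *: x) (c *: y)) -pi_scale scalerDr.
Qed.
Lemma scaleQDl v : {morph scaleQ^~ v: a b / a + b}.
Proof.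
rewrite -[v]repK; move: (rep v) => x a b.
by rewrite -!pi_scale -piD scalerDl.
Qed.
HB.instance Definition _ := GRing.Zmodule_isLmodule.Build K Q scaleQA scale1Q scaleQDr scaleQDl.
Lemma piZ c x : pi (c *: x) = c *: pi x. Proof. exact: pi_scale. Qed.
Lemma piM x y : pi (Y x (-1) y) = pi x * pi y. Proof. exact: pi_mul. Qed.
Lemma pi1 : pi one = 1. Proof. by []. Qed.
Lemma scaleQAl (a : K) (u v : Q) : a *: (u * v) = (a *: u) * v.
Proof.
rewrite -[u]repK -[v]repK; move: (rep u) (rep v) => x y.
by rewrite -(piM x y) -(piZ a x) -(piM (a *: x) y) -(piZ a (Y x (-1) y)) (YlZ HVA).
Qed.
HB.instance Definition _ := GRing.Lmodule_isLalgebra.Build K Q scaleQAl.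
HB.instance Definition _ := GRing.Lalgebra_isComAlgebra.Build K Q.

Variables (M : V -> Prop) (HM : is_subspace M) (HC2M : forall x, C2 x -> M x)
  (Hfin : fin_dim_mod_C2 Y M).
Definition UQ (a : Q) := M (rep a).
Lemma M_eqv x y : C2 (x - y) -> M y -> M x.
Proof.
move=> h hy; case: HM => _ HMc.
by have := HMc 1 (x - y) y (HC2M h) hy; rewrite scale1r subrK.
Qed.
Lemma UQpi x : UQ (pi x) <-> M x.
Proof.
split => h; first exact: (M_eqv (rep_pi' x)).
exact: (M_eqv (rep_pi x)).
Qed.
Lemma UQ0 : UQ 0.
Proof. by rewrite -pi0; apply/UQpi; case: HM. Qed.
Lemma UQD a b : UQ a -> UQ b -> UQ (a + b).
Proof.
move=> ha hb; rewrite -[a]repK -[b]repK -piD; apply/UQpi.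
by case: HM => _ h; have := h 1 _ _ ha hb; rewrite scale1r.
Qed.
Lemma UQZ (c : K) a : UQ a -> UQ (c *: a).
Proof.
move=> ha; rewrite -[a]repK -piZ; apply/UQpi.
case: HM => h0 h; have := h c _ _ ha h0; by rewrite addr0.
Qed.
Lemma pi_sum n (F : 'I_n -> V) : pi (\sum_(i < n) F i) = \sum_(i < n) pi (F i).
Proof. exact: (big_morph pi piD pi0). Qed.
Lemma FDQ : exists n (f : 'I_n -> Q), forall a, UQ a -> exists c : 'I_n -> K, a = \sum_i c i *: f i.
Proof.
case: Hfin => n [f [fM hf]]; exists n, (fun i => pi (f i)) => a ha.
case: (hf _ ha) => c hc; exists c.
transitivity (pi (\sum_i c i *: f i)); first by rewrite -[LHS]repK; apply/piP'.
by rewrite pi_sum; apply: eq_bigr => i _; rewrite piZ.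
Qed.
Lemma pi_powrep v k : pi (powrep Y v k) = (pi v) ^+ k.+1.
Proof.
elim: k => [|k IH]; first by rewrite /= expr1.
by rewrite /= piM IH -exprS.
Qed.
Lemma repr_rA v : rep_r Y M v <-> rA UQ (pi v).
Proof.
split.
- case=> m [m1 h]; exists m => t ht; rewrite -pi_powrep; apply/UQpi.
  exact: (h t.+1 (leqW ht)).
- case=> m h; exists m.+1; split => // t ht.
  have := h t.-1 ltac:(lia); rewrite -pi_powrep => /UQpi //.
Qed.
Lemma leibQ b v t : pi (Y b 0 (powrep Y v t)) = (pi (Y b 0 v) * (pi v) ^+ t) *+ t.+1.
Proof.
elim: t => [|t IH] /=; first by rewrite expr0 mulr1.
rewrite (comm0 HVA) piD !piM IH pi_powrep.
by rewrite !exprS; ring.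
Qed.
Lemma skewQ x y : pi (Y x 0 y) = - pi (Y y 0 x).
Proof.
have : pi (Y x 0 y + Y y 0 x) = pi 0 by apply/piP'; rewrite subr0; exact: (skew0 HVA).
by rewrite piD pi0 => /eqP; rewrite addr_eq0 => /eqP.
Qed.

Lemma mainQ : MZ01_subspace Y M <-> is_ideal_preimage Y (rep_r Y M).
Proof.
have [n [f Hf]] := FDQ.
split.
- move=> HMZ.
  have H : forall a, rA UQ a -> lsrA UQ a.
    move=> a ha b'; set v := rep a.
    have hv : rA UQ (pi v) by rewrite /v repK.
    have r01v : r01 Y M v := r01_of_rep HVA HC2M (proj2 (repr_rA v) hv).
    have [hl _] := proj1 (HMZ v) r01v.
    case: (hl (rep b')) => m hm; exists m => t ht.
    have := hm (nseq t (-1)) (-1) erefl (all01_nseq t) ltac:(by rewrite size_nseq).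
    rewrite iter_nseq => /UQpi; by rewrite piM repK pi_powrep /v repK.
  have [Hadd Hsc Hmul] := T_fwd UQ0 UQD UQZ Hf H.
  have r0 : rA UQ 0 by exists 0%N => t _; rewrite expr0n /=; exact: UQ0.
  split.
  + move=> x hx; apply/repr_rA.
    have -> : pi x = 0 by rewrite -pi0; apply/piP'; rewrite subr0.
    exact: r0.
  + split; first by apply/repr_rA; rewrite pi0.
    move=> c x y hx hy; apply/repr_rA; rewrite piD piZ.
    by apply: Hadd; [apply: Hsc|]; apply/repr_rA.
  + move=> b a ha; apply/repr_rA; rewrite piM; apply: Hmul; exact/repr_rA.
- case=> HC2 [Hs0 Hsc] Hmulr.
  have Hmul : forall b a, rA UQ a -> rA UQ (b * a).
    move=> b a ha; rewrite -[b]repK -[a]repK -piM; apply/repr_rA.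
    by apply: Hmulr; apply/repr_rA; rewrite repK.
  move=> v; split.
  + move=> hr.
    have [N hN] := T_bwd UQ0 UQD UQZ Hf Hmul (proj1 (repr_rA v) (rep_of_r01 hr)).
    split.
    * move=> b; exists N => s k hk hs hsz.
      case: (iter_cases HVA v hs) => [hc|->]; first by apply: HC2M; apply: (F2 HVA).
      case/orP: hk => /eqP ->; apply/UQpi.
      - by rewrite leibQ; apply: (U_natmul UQ0 UQD); apply: hN.
      - by rewrite piM pi_powrep; apply: hN; lia.
    * move=> w; exists N => s k hk hs hsz.
      case: (iter_cases HVA v hs) => [hc|->].
        by apply: HC2M; apply: (F3 HVA) => //; case/orP: hk => /eqP ->.
      case/orP: hk => /eqP ->; apply/UQpi.
      - rewrite skewQ leibQ; apply: (UN UQZ); apply: (U_natmul UQ0 UQD).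
        by apply: hN.
      - by rewrite piM pi_powrep mulrC; apply: hN; lia.
  + case=> hl _; have [m hm] := hl one; exists m => s hs hsz.
    by have := hm s (-1) erefl hs hsz; rewrite (va_vacuum HVA).
Qed.
End Quot.

Local Close Scope quotient_scope.

Lemma mainTriv (K : numFieldType) (V : lmodType K) (Y : V -> int -> V -> V) (one : V)
  (HVA : is_vertex_algebra Y one) (M : V -> Prop) (HC2M : forall x, C2 Y x -> M x)
  (h1 : C2 Y one) : MZ01_subspace Y M <-> is_ideal_preimage Y (rep_r Y M).
Proof.
have allM : forall x, M x.
  move=> x; apply: HC2M; rewrite -[x](va_vacuum HVA (-1)) /=.
  by apply: (F3 HVA).
have rr : forall x, rep_r Y M x by move=> x; exists 1%N; split => // t _; exact: allM.
split => _.
- split; first by move=> x _; exact: rr.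
  + by split; [exact: rr | move=> *; exact: rr].
  + by move=> *; exact: rr.
- move=> v; split => _; last by exists 0%N => *; exact: allM.
  by split => [b|w]; exists 0%N => *; exact: allM.
Qed.

Theorem mainTheorem11 (R : realType) (V : lmodType R[i])
    (Y : V -> int -> V -> V) (one : V) (HVA : is_vertex_algebra Y one)
    (M : V -> Prop) (HM : is_subspace M)
    (HC2M : forall x, C2 Y x -> M x) (Hfin : fin_dim_mod_C2 Y M) :
  MZ01_subspace Y M <-> is_ideal_preimage Y (rep_r Y M).
Proof.
case: (classic (C2 Y one)) => h.
  exact: (mainTriv HVA HC2M h).
exact: (mainQ HVA h HM HC2M Hfin).
Qed.
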